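(* Let $P$ and $Q$ be posets such that $\Sigma P$ and $\Sigma Q$ are $\omega$ type spaces. Then the product topology of $\Sigma\sigma(P)$ and $\Sigma\sigma(Q)$ coincides with the Scott topology of the product poset $\sigma(P)\times\sigma(Q)$, i.e. $\Sigma\sigma(P)\times\Sigma\sigma(Q)=\Sigma(\sigma(P)\times\sigma(Q))$.
   Context: For a poset $P$, $\sigma(P)$ is the set of Scott open subsets of $P$ (a set $U$ is Scott open iff it is an upper set and for every directed $D$ whose supremum exists, $\bigvee D\in U$ implies $D\cap U\neq\emptyset$), and $\Sigma P=(P,\sigma(P))$. $\sigma(P)$ is ordered by inclusion, $\Sigma\sigma(P)$ is this poset with its Scott topology, and $\sigma(P)\times\sigma(Q)$ carries the coordinatewise order. A topological space is an $\omega$ type space if it has a subbase consisting of countable subsets. *)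

(* Defs.v *)
(* Sets are predicates X -> Prop;
   a topology on X is the family of its open sets, (X -> Prop) -> Prop. *)
From Stdlib Require Import List.

Set Implicit Arguments.

Definition is_poset (T : Type) (le : T -> T -> Prop) : Prop :=
  (forall x, le x x) /\
  (forall x y, le x y -> le y x -> x = y) /\
  (forall x y z, le x y -> le y z -> le x z).

Definition upper_set (T : Type) (le : T -> T -> Prop) (U : T -> Prop) : Prop :=
  forall x y, U x -> le x y -> U y.

Definition directed (T : Type) (le : T -> T -> Prop) (D : T -> Prop) : Prop :=
  (exists x, D x) /\
  (forall x y, D x -> D y -> exists z, D z /\ le x z /\ le y z).

Definition is_sup (T : Type) (le : T -> T -> Prop) (D : T -> Prop) (s : T) : Prop :=
  (forall x, D x -> le x s) /\
  (forall u, (forall x, D x -> le x u) -> le s u).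

Definition scott_open (T : Type) (le : T -> T -> Prop) (U : T -> Prop) : Prop :=
  upper_set le U /\
  (forall (D : T -> Prop) (s : T), directed le D -> is_sup le D s -> U s ->
     exists x, D x /\ U x).

Definition sigmaP (T : Type) (le : T -> T -> Prop) : Type :=
  { U : T -> Prop | scott_open le U }.

Definition incl (T : Type) (le : T -> T -> Prop) (U V : sigmaP le) : Prop :=
  forall x, proj1_sig U x -> proj1_sig V x.

Definition prod_le (X Y : Type) (r1 : X -> X -> Prop) (r2 : Y -> Y -> Prop)
  (a b : X * Y) : Prop := r1 (fst a) (fst b) /\ r2 (snd a) (snd b).

Definition product_topology (X Y : Type) (t1 : (X -> Prop) -> Prop)
  (t2 : (Y -> Prop) -> Prop) (W : X * Y -> Prop) : Prop :=
  forall p, W p -> exists U V, t1 U /\ t2 V /\ U (fst p) /\ V (snd p) /\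
    (forall x y, U x -> V y -> W (x, y)).

(* the topology generated by a family S as a subbase: unions of finite
   intersections of members of S (the empty intersection being the whole space) *)
Definition generated_by (X : Type) (S : (X -> Prop) -> Prop) (W : X -> Prop) : Prop :=
  forall x, W x -> exists l : list (X -> Prop),
    (forall A, In A l -> S A) /\ (forall A, In A l -> A x) /\
    (forall y, (forall A, In A l -> A y) -> W y).

Definition is_subbase (X : Type) (t : (X -> Prop) -> Prop) (S : (X -> Prop) -> Prop) : Prop :=
  forall W, t W <-> generated_by S W.

Definition countable_set (X : Type) (A : X -> Prop) : Prop :=
  exists f : nat -> X, forall x, A x -> exists n, f n = x.

Definition omega_type (X : Type) (t : (X -> Prop) -> Prop) : Prop :=
  exists S, is_subbase t S /\ forall A, S A -> countable_set A.

(* Main.v *)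
From Stdlib Require Import List Classical ClassicalEpsilon PeanoNat Lia.
Require Import Defs.
Set Implicit Arguments.

Definition cnt (T : Type) (K : T -> Prop) : Prop :=
  exists e : nat -> option T, forall x, K x -> exists n, e n = Some x.

Lemma sig_union_open (T : Type) (le : T -> T -> Prop) (Dd : sigmaP le -> Prop) :
  scott_open le (fun x => exists A, Dd A /\ proj1_sig A x).
Proof.
  split.
  - intros x y [A [DA Ax]] hxy. exists A. split; auto.
    destruct (proj2_sig A) as [Hu _]. eapply Hu; eauto.
  - intros D s HD Hs [A [DA As]]. destruct (proj2_sig A) as [_ Hc].
    destruct (Hc D s HD Hs As) as [x [Dx Ax]]. exists x. split; [exact Dx| exists A; auto].
Qed.

Lemma union2_open (T : Type) (le : T -> T -> Prop) (A B : T -> Prop) :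
  scott_open le A -> scott_open le B -> scott_open le (fun x => A x \/ B x).
Proof.
  intros [HuA HcA] [HuB HcB]. split.
  - intros x y [Ax|Bx] hxy; [left|right]; eauto.
  - intros D s HD Hs [As|Bs].
    + destruct (HcA D s HD Hs As) as [a [Da Aa]]. exists a; auto.
    + destruct (HcB D s HD Hs Bs) as [a [Da Aa]]. exists a; auto.
Qed.

Lemma inter_open (T : Type) (le : T -> T -> Prop) (A B : T -> Prop) :
  is_poset le -> scott_open le A -> scott_open le B -> scott_open le (fun x => A x /\ B x).
Proof.
  intros [_ [_ Htr]] [HuA HcA] [HuB HcB]. split.
  - intros x y [Ax Bx] hxy. split; eauto.
  - intros D s HD Hs [As Bs].
    destruct (HcA D s HD Hs As) as [a [Da Aa]].
    destruct (HcB D s HD Hs Bs) as [b [Db Bb]].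
    destruct HD as [_ HD]. destruct (HD a b Da Db) as [z [Dz [az bz]]].
    exists z. split; [exact Dz | split; eauto].
Qed.

Lemma sup_mem (T : Type) (le : T -> T -> Prop) (Dd : sigmaP le -> Prop) (S : sigmaP le) x :
  is_sup (@incl T le) Dd S -> proj1_sig S x -> exists A, Dd A /\ proj1_sig A x.
Proof.
  intros [_ Hl] Sx.
  set (Z := exist (scott_open le) _ (sig_union_open Dd)).
  apply (Hl Z (fun A DA y Ay => ex_intro _ A (conj DA Ay)) x Sx).
Qed.

Lemma pt_open (T : Type) (le : T -> T -> Prop) (x : T) :
  scott_open (@incl T le) (fun A => proj1_sig A x).
Proof.
  split.
  - intros A B Ax h. apply h, Ax.
  - intros D S HD HS Sx. apply (@sup_mem _ _ D S x HS Sx).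
Qed.

Definition Ok (T : Type) (le : T -> T -> Prop) (e : nat -> option T) (C : T -> Prop) (k : nat)
  (A : sigmaP le) : Prop :=
  forall i y, i < k -> e i = Some y -> C y -> proj1_sig A y.

Lemma Ok_open (T : Type) (le : T -> T -> Prop) e C k :
  scott_open (@incl T le) (Ok e C k).
Proof.
  split.
  - intros A B HA h i y hi hy hc. apply h; eauto.
  - intros D S HD HS HSk.
    assert (H : forall m, Ok e C m S -> exists A, D A /\ Ok e C m A).
    { induction m as [|m IH]; intros Hm.
      - destruct HD as [[A DA] _]. exists A. split; auto. intros i y hi; lia.
      - destruct IH as [A1 [DA1 HA1]].
        { intros i y hi; apply Hm; lia. }
        destruct (classic (exists y, e m = Some y /\ C y)) as [[y [ey Cy]]|Hn].
        + destruct (@sup_mem _ _ D S y HS (Hm m y (Nat.lt_succ_diag_r m) ey Cy)) as [A2 [DA2 A2y]].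
          destruct (proj2 HD A1 A2 DA1 DA2) as [A3 [DA3 [h1 h2]]].
          exists A3. split; auto. intros i z hi ez Cz.
          destruct (Nat.eq_dec i m) as [->|ne].
          * rewrite ey in ez. injection ez as <-. apply h2, A2y.
          * apply h1. apply (HA1 i z); auto; lia.
        + exists A1. split; auto. intros i z hi ez Cz.
          destruct (Nat.eq_dec i m) as [->|ne].
          * exfalso. apply Hn. eauto.
          * apply (HA1 i z); auto; lia. }
    apply H, HSk.
Qed.

Lemma G_open (T : Type) (le : T -> T -> Prop) (hp : is_poset le) (C : T -> Prop)
  (e : nat -> option T) (He : forall x, C x -> exists n, e n = Some x)
  (HC : scott_open le C) (A : nat -> sigmaP le)
  (HA : forall k, Ok e C k (A k)) (n : nat) :
  scott_open le (fun x => C x /\ forall k, n <= k -> proj1_sig (A k) x).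
Proof.
  destruct hp as [Hrefl [_ Htr]].
  split.
  - intros x y [Cx Hk] hxy. split.
    + eapply (proj1 HC); eauto.
    + intros k hk. apply (proj1 (proj2_sig (A k))) with x; auto.
  - intros D s HD Hs [Cs Hks].
    destruct (proj2 HC D s HD Hs Cs) as [d0 [Dd0 Cd0]].
    destruct (He d0 Cd0) as [j Hj].
    assert (Hm : forall m, exists d, D d /\ le d0 d /\
                 forall k, n <= k -> k < m -> proj1_sig (A k) d).
    { induction m as [|m IH].
      - exists d0. split; auto. split; [apply Hrefl| intros; lia].
      - destruct IH as [d [Dd [d0d Hd]]].
        destruct (Nat.le_gt_cases n m) as [hnm|hnm].
        + destruct (proj2 (proj2_sig (A m)) D s HD Hs (Hks m hnm)) as [dm [Ddm Adm]].
          destruct (proj2 HD d dm Dd Ddm) as [z [Dz [dz dmz]]].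
          exists z. split; auto. split; [eauto|].
          intros k hk1 hk2. destruct (Nat.eq_dec k m) as [->|ne].
          * apply (proj1 (proj2_sig (A m))) with dm; auto.
          * apply (proj1 (proj2_sig (A k))) with d; auto. apply Hd; lia.
        + exists d. split; auto. split; auto. intros k hk1 hk2. lia. }
    destruct (Hm (S j)) as [d [Dd [d0d Hd]]]. exists d. split; auto. split.
    + eapply (proj1 HC); eauto.
    + intros k hk. destruct (Nat.lt_ge_cases k (S j)) as [h|h].
      * apply Hd; lia.
      * apply (proj1 (proj2_sig (A k))) with d0; auto.
        apply (HA k j d0); auto; lia.
Qed.

Lemma prod_to_scott (X Y : Type) (r1 : X -> X -> Prop) (r2 : Y -> Y -> Prop)
  (W : X * Y -> Prop) :
  product_topology (scott_open r1) (scott_open r2) W -> scott_open (prod_le r1 r2) W.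
Proof.
  intros HW. split.
  - intros p q Wp [h1 h2].
    destruct (HW p Wp) as [U [V [HU [HV [Up [Vp Hb]]]]]].
    destruct q as [a b]. apply Hb.
    + apply (proj1 HU) with (fst p); auto.
    + apply (proj1 HV) with (snd p); auto.
  - intros D s HD Hs Ws.
    destruct (HW s Ws) as [U [V [HU [HV [Us [Vs Hb]]]]]].
    destruct HD as [[p0 Dp0] HD].
    assert (HD1 : directed r1 (fun a => exists b, D (a, b))).
    { split.
      - exists (fst p0), (snd p0). destruct p0; auto.
      - intros a1 a2 [b1 D1] [b2 D2]. destruct (HD _ _ D1 D2) as [z [Dz [[h1 _] [h2 _]]]].
        exists (fst z). split; [exists (snd z); destruct z; auto | auto]. }
    assert (HD2 : directed r2 (fun b => exists a, D (a, b))).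
    { split.
      - exists (snd p0), (fst p0). destruct p0; auto.
      - intros a1 a2 [b1 D1] [b2 D2]. destruct (HD _ _ D1 D2) as [z [Dz [[_ h1] [_ h2]]]].
        exists (snd z). split; [exists (fst z); destruct z; auto | auto]. }
    assert (HS1 : is_sup r1 (fun a => exists b, D (a, b)) (fst s)).
    { split.
      - intros a [b Dab]. apply (proj1 Hs _ Dab).
      - intros u Hu. assert (h : prod_le r1 r2 s (u, snd s)).
        { apply (proj2 Hs). intros [a b] Dab. split; simpl.
          - apply Hu. exists b; auto.
          - apply (proj1 Hs _ Dab). }
        apply h. }
    assert (HS2 : is_sup r2 (fun b => exists a, D (a, b)) (snd s)).
    { split.
      - intros b [a Dab]. apply (proj1 Hs _ Dab).
      - intros u Hu. assert (h : prod_le r1 r2 s (fst s, u)).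
        { apply (proj2 Hs). intros [a b] Dab. split; simpl.
          - apply (proj1 Hs _ Dab).
          - apply Hu. exists a; auto. }
        apply h. }
    destruct (proj2 HU _ _ HD1 HS1 Us) as [a [[b Dab] Ua]].
    destruct (proj2 HV _ _ HD2 HS2 Vs) as [b' [[a' Dab'] Vb']].
    destruct (HD _ _ Dab Dab') as [z [Dz [[h1 _] [_ h2]]]].
    exists z. split; auto. destruct z as [z1 z2]. apply Hb.
    + apply (proj1 HU) with a; auto.
    + apply (proj1 HV) with b'; auto.
Qed.

Lemma sec_left (X Y : Type) (r1 : X -> X -> Prop) (r2 : Y -> Y -> Prop)
  (refl2 : forall y, r2 y y) (W : X * Y -> Prop) (V : Y) :
  scott_open (prod_le r1 r2) W -> scott_open r1 (fun A => W (A, V)).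
Proof.
  intros [Hu Hc]. split.
  - intros a b Wa h. apply (Hu (a, V)); auto. split; simpl; auto.
  - intros D S HD HS WS.
    assert (HD' : directed (prod_le r1 r2) (fun p => D (fst p) /\ snd p = V)).
    { destruct HD as [[a Da] HD]. split.
      - exists (a, V). simpl; auto.
      - intros [x1 y1] [x2 y2] [D1 e1] [D2 e2]. simpl in *. subst.
        destruct (HD _ _ D1 D2) as [z [Dz [h1 h2]]]. exists (z, V). simpl.
        repeat split; auto. }
    assert (HS' : is_sup (prod_le r1 r2) (fun p => D (fst p) /\ snd p = V) (S, V)).
    { split.
      - intros [x y] [Dx e]. simpl in *. subst. split; simpl; auto. apply (proj1 HS _ Dx).
      - intros [u1 u2] Hu'. destruct HD as [[a Da] _]. split; simpl.
        + apply (proj2 HS). intros x Dx. apply (Hu' (x, V)). simpl; auto.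
        + apply (Hu' (a, V)). simpl; auto. }
    destruct (Hc _ _ HD' HS' WS) as [[x y] [[Dx e] Wxy]]. simpl in *. subst.
    exists x. auto.
Qed.

Lemma sec_right (X Y : Type) (r1 : X -> X -> Prop) (r2 : Y -> Y -> Prop)
  (refl1 : forall x, r1 x x) (W : X * Y -> Prop) (U : X) :
  scott_open (prod_le r1 r2) W -> scott_open r2 (fun B => W (U, B)).
Proof.
  intros [Hu Hc]. split.
  - intros a b Wa h. apply (Hu (U, a)); auto. split; simpl; auto.
  - intros D S HD HS WS.
    assert (HD' : directed (prod_le r1 r2) (fun p => D (snd p) /\ fst p = U)).
    { destruct HD as [[a Da] HD]. split.
      - exists (U, a). simpl; auto.
      - intros [x1 y1] [x2 y2] [D1 e1] [D2 e2]. simpl in *. subst.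
        destruct (HD _ _ D1 D2) as [z [Dz [h1 h2]]]. exists (U, z). simpl.
        repeat split; auto. }
    assert (HS' : is_sup (prod_le r1 r2) (fun p => D (snd p) /\ fst p = U) (U, S)).
    { split.
      - intros [x y] [Dx e]. simpl in *. subst. split; simpl; auto. apply (proj1 HS _ Dx).
      - intros [u1 u2] Hu'. destruct HD as [[a Da] _]. split; simpl.
        + apply (Hu' (U, a)). simpl; auto.
        + apply (proj2 HS). intros x Dx. apply (Hu' (U, x)). simpl; auto. }
    destruct (Hc _ _ HD' HS' WS) as [[x y] [[Dy e] Wxy]]. simpl in *. subst.
    exists y. auto.
Qed.

Lemma find_cnt (T : Type) (le : T -> T -> Prop) (hp : is_poset le)
  (oT : omega_type (scott_open le)) (U : sigmaP le) (Pr : sigmaP le -> Prop)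
  (HPr : scott_open (@incl T le) Pr) (HU : Pr U) :
  (exists x, proj1_sig U x /\ forall O, scott_open le O -> O x -> forall y, O y)
  \/ (exists C : sigmaP le, Pr C /\ incl C U /\ cnt (proj1_sig C)).
Proof.
  destruct oT as [SB [HSB Hcnt]].
  destruct (classic (forall x, proj1_sig U x -> exists K : T -> Prop,
     scott_open le K /\ cnt K /\ K x /\ forall y, K y -> proj1_sig U y)) as [Hall|Hn].
  - right.
    set (Dd := fun K : sigmaP le => cnt (proj1_sig K) /\ incl K U).
    assert (Hdir : directed (@incl T le) Dd).
    { split.
      - assert (h0 : scott_open le (fun _ : T => False)).
        { split; [intros x y [] | intros D s _ _ []]. }
        exists (exist _ _ h0). split.
        + exists (fun _ => None). intros x [].
        + intros x [].
      - intros K1 K2 [[e1 He1] I1] [[e2 He2] I2].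
        pose proof (union2_open (proj2_sig K1) (proj2_sig K2)) as h.
        exists (exist _ _ h). simpl. split; [split|split].
        + exists (fun n => if Nat.even n then e1 (Nat.div2 n) else e2 (Nat.div2 n)).
          intros x [h1|h2].
          * destruct (He1 x h1) as [m hm]. exists (2 * m).
            rewrite Nat.even_even, Nat.div2_double. exact hm.
          * destruct (He2 x h2) as [m hm]. exists (2 * m + 1).
            rewrite Nat.even_odd, Nat.div2_odd'. exact hm.
        + intros x [h1|h2]; auto.
        + intros x h1; simpl; auto.
        + intros x h1; simpl; auto. }
    assert (Hsup : is_sup (@incl T le) Dd U).
    { split.
      - intros K [_ h]. exact h.
      - intros Z HZ x Ux. destruct (Hall x Ux) as [K [HK [cK [Kx KU]]]].
        apply (HZ (exist _ K HK)); auto. split; auto. }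
    destruct (proj2 HPr Dd U Hdir Hsup HU) as [C [[cC CU] PC]].
    exists C. auto.
  - left. apply not_all_ex_not in Hn. destruct Hn as [x Hx].
    apply imply_to_and in Hx. destruct Hx as [Ux Hx].
    exists x. split; auto. intros O HO Ox.
    pose proof (inter_open hp HO (proj2_sig U)) as HOU.
    destruct (proj1 (HSB _) HOU x (conj Ox Ux)) as [l [HlS [Hlx Hly]]].
    destruct l as [|a l'].
    + intros y. apply (Hly y (fun A (H : In A nil) => False_ind _ H)).
    + exfalso. apply Hx.
      exists (fun y => forall A, In A (a :: l') -> A y).
      split; [|split; [|split]].
      * apply (proj2 (HSB _)). intros y Hy. exists (a :: l'). auto.
      * destruct (Hcnt a (HlS a (or_introl eq_refl))) as [f Hf].
        exists (fun n => Some (f n)). intros y Hy.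
        destruct (Hf y (Hy a (or_introl eq_refl))) as [n Hn]. exists n. rewrite Hn; auto.
      * exact Hlx.
      * intros y Hy. apply (Hly y Hy).
Qed.

Lemma main_arg (T1 : Type) (le1 : T1 -> T1 -> Prop) (T2 : Type) (le2 : T2 -> T2 -> Prop)
  (hp1 : is_poset le1) (hp2 : is_poset le2)
  (W : sigmaP le1 * sigmaP le2 -> Prop)
  (HW : scott_open (prod_le (@incl T1 le1) (@incl T2 le2)) W)
  (C : sigmaP le1) (D : sigmaP le2)
  (e1 : nat -> option T1) (He1 : forall x, proj1_sig C x -> exists n, e1 n = Some x)
  (e2 : nat -> option T2) (He2 : forall x, proj1_sig D x -> exists n, e2 n = Some x)
  (HCD : W (C, D)) :
  exists n, forall A B, Ok e1 (proj1_sig C) n A -> Ok e2 (proj1_sig D) n B -> W (A, B).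
Proof.
  apply NNPP. intros Hno.
  assert (Hn : forall n, exists p : sigmaP le1 * sigmaP le2,
     Ok e1 (proj1_sig C) n (fst p) /\ Ok e2 (proj1_sig D) n (snd p) /\ ~ W p).
  { intros n. apply NNPP. intros H. apply Hno. exists n. intros A B HA HB.
    apply NNPP. intros HnW. apply H. exists (A, B). simpl. auto. }
  set (pick := fun n => proj1_sig (constructive_indefinite_description _ (Hn n))).
  assert (Hpick : forall n, Ok e1 (proj1_sig C) n (fst (pick n)) /\
     Ok e2 (proj1_sig D) n (snd (pick n)) /\ ~ W (pick n)).
  { intros n. unfold pick. destruct (constructive_indefinite_description _ (Hn n)). auto. }
  set (A := fun n => fst (pick n)). set (B := fun n => snd (pick n)).
  assert (HA : forall k, Ok e1 (proj1_sig C) k (A k)) by (intros k; apply Hpick).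
  assert (HB : forall k, Ok e2 (proj1_sig D) k (B k)) by (intros k; apply Hpick).
  set (G := fun n => exist (scott_open le1) _ (@G_open _ _ hp1 _ _ He1 (proj2_sig C) A HA n)).
  set (H := fun n => exist (scott_open le2) _ (@G_open _ _ hp2 _ _ He2 (proj2_sig D) B HB n)).
  set (Dd := fun p => exists n, p = (G n, H n)).
  assert (Hdir : directed (prod_le (@incl T1 le1) (@incl T2 le2)) Dd).
  { split.
    - exists (G 0, H 0). exists 0. auto.
    - intros p q [n ->] [m ->]. exists (G (Nat.max n m), H (Nat.max n m)).
      split; [exists (Nat.max n m); auto|].
      split; split; simpl; intros x [cx hx]; split; auto; intros k hk; apply hx; lia. }
  assert (Hsup : is_sup (prod_le (@incl T1 le1) (@incl T2 le2)) Dd (C, D)).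
  { split.
    - intros p [n ->]. split; simpl; intros x [cx _]; exact cx.
    - intros [Z1 Z2] HZ. split; simpl.
      + intros x Cx. destruct (He1 x Cx) as [j hj].
        apply (proj1 (HZ (G (S j), H (S j)) (ex_intro _ (S j) eq_refl))). simpl.
        split; auto. intros k hk. apply (HA k j x); auto; lia.
      + intros x Dx. destruct (He2 x Dx) as [j hj].
        apply (proj2 (HZ (G (S j), H (S j)) (ex_intro _ (S j) eq_refl))). simpl.
        split; auto. intros k hk. apply (HB k j x); auto; lia. }
  destruct (proj2 HW Dd (C, D) Hdir Hsup HCD) as [p [[n ->] Wp]].
  destruct (Hpick n) as [_ [_ Hnw]]. apply Hnw.
  rewrite (surjective_pairing (pick n)).
  apply (proj1 HW (G n, H n)); auto.
  split; simpl; intros x [_ hx]; apply hx; lia.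
Qed.

Theorem theorem4p8 (P : Type) (leP : P -> P -> Prop) (Q : Type) (leQ : Q -> Q -> Prop)
  (hP : is_poset leP) (hQ : is_poset leQ)
  (oP : omega_type (scott_open leP)) (oQ : omega_type (scott_open leQ)) :
  forall W : sigmaP leP * sigmaP leQ -> Prop,
    product_topology (scott_open (@incl P leP)) (scott_open (@incl Q leQ)) W <->
    scott_open (prod_le (@incl P leP) (@incl Q leQ)) W.
Proof.
  intros W. split.
  - apply prod_to_scott.
  - intros HW [U V] Wp.
    assert (rP : forall A : sigmaP leP, incl A A) by (intros A x h; exact h).
    assert (rQ : forall A : sigmaP leQ, incl A A) by (intros A x h; exact h).
    destruct (find_cnt hP oP U (sec_left rQ V HW) Wp) as [[x [Ux Hx]] | [C [WC [CU [e1 He1]]]]].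
    + exists (fun A : sigmaP leP => proj1_sig A x), (fun B => W (U, B)).
      split; [apply pt_open|]. split; [apply (sec_right rP U HW)|].
      simpl. split; auto. split; auto.
      intros A B Ax WUB. apply (proj1 HW (U, B)); auto. split; simpl; auto.
      intros y _. apply (Hx _ (proj2_sig A) Ax).
    + destruct (find_cnt hQ oQ V (sec_right rP C HW) WC) as [[y [Vy Hy]] | [D [WCD [DV [e2 He2]]]]].
      * exists (fun A => W (A, V)), (fun B : sigmaP leQ => proj1_sig B y).
        split; [apply (sec_left rQ V HW)|]. split; [apply pt_open|].
        simpl. split; auto. split; auto.
        intros A B WAV By. apply (proj1 HW (A, V)); auto. split; simpl; auto.
        intros z _. apply (Hy _ (proj2_sig B) By).
      * destruct (@main_arg _ _ _ _ hP hQ W HW C D e1 He1 e2 He2 WCD) as [n Hn].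
        exists (Ok e1 (proj1_sig C) n), (Ok e2 (proj1_sig D) n).
        split; [apply Ok_open|]. split; [apply Ok_open|].
        simpl. split; [|split; [|exact Hn]].
        -- intros i z _ _ Cz. apply CU, Cz.
        -- intros i z _ _ Dz. apply DV, Dz.
Qed.
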